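(* Fix $\epsilon\in(0,\frac13)$ and $d\ge4$. Let $f:\{0,1\}^d\to\mathbb{R}$ satisfy $\ell_0(f,\mathrm{Lip})\le\epsilon$. Choose $p\in\{0,1\}^d$ uniformly at random, set $t=2\sqrt{d\log(d/\epsilon)}$ and $I=[f(p)-t,f(p)+t]$. Then, with probability at most $\frac5{12}$ over $p$, $\Pr_{x}[f(x)\notin I]>\epsilon[\overline I]+\frac\epsilon d$, where $x$ is uniform in $\{0,1\}^d$ and $\overline I=\mathbb{R}\setminus I$.
   Context: On $\{0,1\}^d$ with Hamming distance, $f$ is Lipschitz if $|f(x)-f(y)|\le|x-y|$; $\ell_0(f,\mathrm{Lip})=\min_{g\text{ Lipschitz}}\Pr_x[f(x)\ne g(x)]$. $VS_f(x,y)=|f(x)-f(y)|-|x-y|$ if positive, else $0$; $B_{0,f}$ is the graph on $\{0,1\}^d$ with an edge between $x,y$ iff $VS_f(x,y)>0$. Fix a canonical minimum vertex cover $C$ of $B_{0,f}$; for an interval (or set) $J\subseteq\mathbb{R}$, $\epsilon[J]=|\{x\in C: f(x)\in J\}|/2^d$. (Equivalently, $\Pr_x[f(x)\notin I]$ is the $\ell_0$-distance between $f$ and the partial function $f_I$ that agrees with $f$ where $f(x)\in I$ and is undefined elsewhere.) *)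

(* Defs.v *)
From HB Require Import structures.
From mathcomp Require Import all_boot all_order all_algebra.
From mathcomp Require Import all_classical all_reals all_analysis.
Set Implicit Arguments. Unset Strict Implicit. Unset Printing Implicit Defensive.
Import Order.TTheory GRing.Theory Num.Theory.
Local Open Scope ring_scope.

Definition cube (d : nat) := {ffun 'I_d -> bool}.

Definition hamming (d : nat) (x y : cube d) : nat := #|[pred i | x i != y i]|.

Section Defs.
Variables (R : realType) (d : nat).

Definition lipschitz (g : cube d -> R) : Prop :=
  forall x y : cube d, `|g x - g y| <= (hamming x y)%:R.

Definition disagree (f g : cube d -> R) : R :=
  #|[pred x : cube d | f x != g x]|%:R / (2 ^ d)%:R.

(* l_0(f, Lip) = min over Lipschitz g of Pr_x[f x <> g x] (taken as infimum;
   the minimum is attained since there are finitely many possible values). *)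
Definition l0_Lip (f : cube d -> R) : R :=
  inf [set r : R | exists g : cube d -> R, lipschitz g /\ r = disagree f g]%classic.

Definition VS (f : cube d -> R) (x y : cube d) : R :=
  Num.max (`|f x - f y| - (hamming x y)%:R) 0.

Definition B0 (f : cube d -> R) (x y : cube d) : bool := 0 < VS f x y.

Definition vertex_cover (f : cube d -> R) (C : {set cube d}) : Prop :=
  forall x y : cube d, B0 f x y -> (x \in C) || (y \in C).

Definition min_vertex_cover (f : cube d -> R) (C : {set cube d}) : Prop :=
  vertex_cover f C /\ forall C' : {set cube d}, vertex_cover f C' -> (#|C| <= #|C'|)%N.

Definition epsC (f : cube d -> R) (C : {set cube d}) (J : R -> bool) : R :=
  #|[pred x : cube d | (x \in C) && J (f x)]|%:R / (2 ^ d)%:R.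

Definition prob_notin (f : cube d -> R) (J : R -> bool) : R :=
  #|[pred x : cube d | ~~ J (f x)]|%:R / (2 ^ d)%:R.

Definition intv (a t : R) : R -> bool := fun r => (a - t <= r) && (r <= a + t).

End Defs.

(* Main.v *)
Require Import Defs.
From HB Require Import structures.
From mathcomp Require Import all_boot all_order all_algebra.
From mathcomp Require Import all_classical all_reals all_analysis.
From mathcomp Require Import ring lra.
Import Order.TTheory GRing.Theory Num.Theory.
Local Open Scope ring_scope.


Lemma ham_tri d (x y z : cube d) : (hamming x z <= hamming x y + hamming y z)%N.
Proof.
rewrite /hamming -cardUI; apply: leq_trans (leq_addr _ _).
apply: subset_leq_card; apply/fintype.subsetP => i; rewrite !inE.
by case: (x i); case: (y i); case: (z i).
Qed.

Lemma ham_sym d (x y : cube d) : hamming x y = hamming y x.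
Proof. by rewrite /hamming; apply: eq_card => i; rewrite !inE eq_sym. Qed.

Lemma ham_le d (x y : cube d) : (hamming x y <= d)%N.
Proof. by rewrite /hamming; apply: leq_trans (max_card _) _; rewrite card_ord. Qed.

Lemma card_cube d : #|{: cube d}| = (2 ^ d)%N.
Proof. by rewrite /cube card_ffun card_bool card_ord. Qed.

Definition flip d (k : 'I_d) (x : cube d) : cube d :=
  [ffun i => if i == k then ~~ x i else x i].

Arguments flip {d}.

Lemma flipK d (k : 'I_d) : involutive (flip k).
Proof. by move=> x; apply/ffunP => i; rewrite !ffunE; case: eqP => // _; rewrite negbK. Qed.

Lemma flip_inj d (k : 'I_d) : injective (flip k).
Proof. by move=> x y /(congr1 (flip k)); rewrite !flipK. Qed.

Definition mix d (k : nat) (x z : cube d) : cube d :=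
  [ffun i : 'I_d => if (i < k)%N then x i else z i].

Arguments mix {d}.

Lemma ham_flip d (k : 'I_d) (a b : cube d) :
  (forall i, i != k -> a i = b i) -> (hamming a b <= 1)%N.
Proof.
move=> H; rewrite /hamming -(card1 k); apply: subset_leq_card; apply/fintype.subsetP=> i.
by rewrite !inE; apply: contraR => /H ->.
Qed.


Definition Ek (R : realType) d (g : cube d -> R) (k : nat) (x : cube d) : R :=
  (\sum_z g (mix k x z)) / (2 ^ d)%:R.

Arguments Ek {R d}.

Lemma N_gt0 (R : realType) d : 0 < (2 ^ d)%:R :> R.
Proof. by rewrite ltr0n expn_gt0. Qed.

Lemma sum_cube_const (R : realType) d (c : R) : \sum_(z : cube d) c = c * (2 ^ d)%:R.
Proof. by rewrite sumr_const card_cube mulr_natr. Qed.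

Lemma Ek_d (R : realType) d (g : cube d -> R) x : Ek g d x = g x.
Proof.
rewrite /Ek (eq_bigr (fun _ => g x)); last first.
  by move=> z _; congr g; apply/ffunP => i; rewrite ffunE ltn_ord.
by rewrite sum_cube_const mulfK // gt_eqF // N_gt0.
Qed.

Lemma Ek_0 (R : realType) d (g : cube d -> R) x : Ek g 0 x = (\sum_z g z) / (2 ^ d)%:R.
Proof.
rewrite /Ek; congr (_ / _); apply: eq_bigr => z _; congr g.
by apply/ffunP => i; rewrite ffunE.
Qed.

Lemma sum_half (R : realType) d (kk : 'I_d) (F : cube d -> R) (b : bool) :
  (forall z, F (flip kk z) = F z) ->
  \sum_z F z = 2 * \sum_(z : cube d | z kk == b) F z.
Proof.
move=> HF; rewrite (bigID (fun z : cube d => z kk == b)) /=.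
rewrite [X in _ + X](reindex_inj (@flip_inj d kk)) /=.
rewrite (eq_big (fun z : cube d => z kk == b) F (P1 := fun j => flip kk j kk != b) (F1 := fun j => F (flip kk j))); last 2 first.
- by move=> z; rewrite ffunE eqxx; case: (z kk); case: b.
- by move=> z _; rewrite HF.
by rewrite mulr2n mulrDl mul1r.
Qed.

Lemma Ek_split (R : realType) d (g : cube d -> R) (kk : 'I_d) x :
  Ek g kk x = (Ek g kk.+1 x + Ek g kk.+1 (flip kk x)) / 2.
Proof.
have Hm : forall y z, mix kk.+1 y (flip kk z) = mix kk.+1 y z.
  move=> y z; apply/ffunP => i; rewrite !ffunE; case: ltnP => // Hi.
  by case: eqP => // Hik; move: Hi; rewrite Hik ltnn.
rewrite /Ek (@sum_half R d kk (fun z => g (mix kk.+1 x z)) (x kk) (fun z => congr1 g (Hm x z))).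
rewrite (@sum_half R d kk (fun z => g (mix kk.+1 (flip kk x) z)) (~~ x kk) (fun z => congr1 g (Hm (flip kk x) z))).
rewrite (bigID (fun z : cube d => z kk == x kk)) /=.
have E1 : forall z : cube d, z kk == x kk -> g (mix kk x z) = g (mix kk.+1 x z).
  move=> z /eqP Hz; congr g; apply/ffunP => i; rewrite !ffunE.
  case: (ssrnat.ltngtP i kk) => Hi.
  - by rewrite ltnS (ltnW Hi).
  - by rewrite ltnS leqNgt Hi.
  - by rewrite ltnS Hi leqnn; have -> : i = kk by apply: val_inj.
have E2 : forall z : cube d, z kk != x kk -> g (mix kk x z) = g (mix kk.+1 (flip kk x) z).
  move=> z Hz; congr g; apply/ffunP => i; rewrite !ffunE.
  case: (ssrnat.ltngtP i kk) => Hi.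
  - rewrite ltnS (ltnW Hi); case: eqP => // Hik.
    by move: Hi; rewrite Hik ltnn.
  - by rewrite ltnS leqNgt Hi.
  - have Hik : i = kk by apply: val_inj.
    rewrite ltnS Hi leqnn Hik eqxx.
    by move: Hz; case: (z kk); case: (x kk).
rewrite (eq_bigr _ E1) (eq_bigr _ E2).
have -> : \sum_(i : cube d | i kk != x kk) g (mix kk.+1 (flip kk x) i) = \sum_(i : cube d | i kk == ~~ x kk) g (mix kk.+1 (flip kk x) i).
  by apply: eq_bigl => z; case: (z kk); case: (x kk).
have h2 : (2 : R) != 0 by rewrite pnatr_eq0.
have hN : (2 ^ d)%:R != 0 :> R by rewrite gt_eqF // N_gt0.
by field.
Qed.

Lemma Ek_lip (R : realType) d (g : cube d -> R) (kk : 'I_d) (x : cube d) :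
  Defs.lipschitz g -> `|Ek g kk.+1 x - Ek g kk.+1 (flip kk x)| <= 1.
Proof.
move=> Hg; rewrite /Ek -mulrBl -sumrB normrM.
rewrite [`|_^-1|]ger0_norm ?invr_ge0 ?ler0n // ler_pdivrMr ?N_gt0 // mul1r.
apply: le_trans (ler_norm_sum _ _ _) _.
rewrite -[X in _ <= X]mul1r -sum_cube_const; apply: ler_sum => z _.
apply: le_trans (Hg _ _) _; rewrite (_ : (1:R) = 1%:R) // ler_nat; apply: (@ham_flip d kk) => i Hi.
by rewrite !ffunE (negbTE Hi).
Qed.

Lemma mgf (R : realType) d (g : cube d -> R) (mu K : R) :
  Defs.lipschitz g ->
  (forall a b : R, `|a - b| <= 1 ->
     expR (mu * a) + expR (mu * b) <= 2 * K * expR (mu * ((a + b) / 2))) ->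
  \sum_x expR (mu * g x) <=
    K ^+ d * (2 ^ d)%:R * expR (mu * ((\sum_x g x) / (2 ^ d)%:R)).
Proof.
move=> Hg HK.
have K1 : 1 <= K.
  have := HK 0 0; rewrite subrr normr0 ler01 add0r mul0r mulr0 expR0 => /(_ isT).
  by move=> H; lra.
have step : forall k, (k <= d)%N ->
  \sum_x expR (mu * Ek g k x) <= K ^+ k * \sum_x expR (mu * Ek g 0 x).
  elim=> [|k IH] Hk; first by rewrite expr0 mul1r.
  have Hkd : (k < d)%N by [].
  pose kk := Ordinal Hkd.
  have -> : k = kk by [].
  have E : \sum_x expR (mu * Ek g kk.+1 x) =
      (\sum_x (expR (mu * Ek g kk.+1 x) + expR (mu * Ek g kk.+1 (flip kk x)))) / 2.
    have Hr : \sum_x expR (mu * Ek g kk.+1 (flip kk x)) = \sum_x expR (mu * Ek g kk.+1 x).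
      by rewrite [RHS](reindex_inj (@flip_inj d kk)).
    rewrite big_split /= Hr.
    by field.
  rewrite E exprS -mulrA; apply: le_trans (_ : K * \sum_x expR (mu * Ek g kk x) <= _).
    rewrite ler_pdivrMr // mulrC mulr_sumr mulr_sumr; apply: ler_sum => x _.
    rewrite (@Ek_split R d g kk x).
by rewrite [2 * _]mulrA; apply: HK; apply: Ek_lip.
  by rewrite ler_pM2l ?(lt_le_trans ltr01 K1) // IH // ltnW.
have := step d (leqnn d).
rewrite (eq_bigr (fun x => expR (mu * g x))); last by move=> x _; rewrite Ek_d.
have -> : \sum_x expR (mu * Ek g 0 x) = \sum_(x : cube d) expR (mu * ((\sum_x g x) / (2 ^ d)%:R)).
  by apply: eq_bigr => x _; rewrite Ek_0.
move=> H; apply: (le_trans H); rewrite sum_cube_const; rewrite le_eqVlt; apply/orP; left; apply/eqP; ring.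
Qed.


Lemma poly_bd (R : realType) (v : R) : 0 <= v -> v <= 1/36 ->
  2 + 12 * v + 2 * v ^+ 2 <= (2 + 24 * v) * (1 - v) ^+ 4.
Proof.
move=> h0 h1.
have h2 : 0 <= v ^+ 2 by rewrite sqr_ge0.
have h3 : v ^+ 3 <= v / 1296.
  have : v ^+ 2 <= 1 / 1296 by rewrite expr2; nra.
  by rewrite exprS; nra.
have h4 : 0 <= v ^+ 4 by rewrite exprn_ge0.
rewrite -subr_ge0.
have -> : (2 + 24 * v) * (1 - v) ^+ 4 - (2 + 12 * v + 2 * v ^+ 2) =
   2 * v * (2 - 43 * v + 68 * v ^+ 2 - 47 * v ^+ 3 + 12 * v ^+ 4) by ring.
apply: mulr_ge0; lra.
Qed.

Lemma exp_le_inv (R : realType) (y : R) : y < 1 -> expR y ^+ 4 * (1 - y) ^+ 4 <= 1.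
Proof.
move=> hy; rewrite -exprMn; apply: exprn_ile1.
  by apply: mulr_ge0; [exact: expR_ge0 | lra].
have h1 := expR_ge1Dx (- y).
have h2 := expRxMexpNx_1 y.
have h3 := expR_ge0 y.
nra.
Qed.

Lemma cosh_bd (R : realType) (w : R) : `|w| <= 2/3 ->
  expR w + expR (- w) <= 2 + 3/2 * w ^+ 2.
Proof.
move=> /[dup] hw; rewrite ler_norml => /andP [hw1 hw2].
set y := w / 4.
have Ew : expR w = expR y ^+ 4.
  by rewrite -expRM_natl /y; congr expR; field.
have Enw : expR (- w) = expR (- y) ^+ 4.
  by rewrite -expRM_natl /y; congr expR; field.
have A1 := @exp_le_inv R y ltac:(rewrite /y; lra).
have B1 := @exp_le_inv R (- y) ltac:(rewrite /y; lra).
set P := (1 - y) ^+ 4 in A1.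
set Q := (1 - - y) ^+ 4 in B1.
have hy1 : 0 < 1 - y by rewrite /y; lra.
have hP : 0 < P by apply: exprn_gt0.
have hy2 : 0 < 1 - - y by rewrite /y; lra.
have hQ : 0 < Q by apply: exprn_gt0.
have A2 : expR y ^+ 4 <= P^-1 by rewrite -div1r ler_pdivlMr.
have B2 : expR (- y) ^+ 4 <= Q^-1 by rewrite -div1r ler_pdivlMr.
have hv0 : 0 <= y ^+ 2 by rewrite sqr_ge0.
have hv1 : y ^+ 2 <= 1/36.
  have : `|y| <= 1/6 by rewrite ler_norml; apply/andP; split; rewrite /y; lra.
  rewrite ler_norml => /andP [H1 H2]; rewrite expr2; nra.
have Hpoly := @poly_bd R _ hv0 hv1.
have HPQ : P^-1 + Q^-1 <= 2 + 24 * y ^+ 2.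
  have -> : P^-1 + Q^-1 = (P + Q) / (P * Q) by field; rewrite !gt_eqF.
  rewrite ler_pdivrMr ?mulr_gt0 //.
  have -> : P + Q = 2 + 12 * y ^+ 2 + 2 * (y ^+ 2) ^+ 2 by rewrite /P /Q; ring.
  have -> : P * Q = (1 - y ^+ 2) ^+ 4 by rewrite /P /Q; ring.
  done.
have Hw : 3 / 2 * w ^+ 2 = 24 * y ^+ 2 by rewrite /y; field.
rewrite Ew Enw; lra.
Qed.


Lemma step_ok (R : realType) (mu : R) : `|mu| <= 4/3 ->
  forall a b : R, `|a - b| <= 1 ->
     expR (mu * a) + expR (mu * b) <= 2 * (1 + 3/16 * mu ^+ 2) * expR (mu * ((a + b) / 2)).
Proof.
move=> hmu a b hab.
set w := mu * ((a - b) / 2).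
have Ea : mu * a = mu * ((a + b) / 2) + w by rewrite /w; field.
have Eb : mu * b = mu * ((a + b) / 2) + - w by rewrite /w; field.
rewrite Ea Eb !expRD -mulrDr [_ * expR (mu * _)]mulrC.
rewrite ler_wpM2l ?expR_ge0 //.
have hw : `|w| <= 2/3.
  rewrite /w !normrM [`|2^-1|]ger0_norm ?invr_ge0 //.
  have := normr_ge0 mu; have := normr_ge0 (a - b); nra.
have hw2 : w ^+ 2 <= mu ^+ 2 / 4.
  have Hn : `|(a - b) / 2| <= 1/2.
    rewrite normrM [`|2^-1|]ger0_norm ?invr_ge0 //; lra.
  have Hq : ((a - b) / 2) ^+ 2 <= 1/4.
    rewrite -real_normK ?num_real //; have := normr_ge0 ((a - b) / 2); nra.
  rewrite /w exprMn; have Hm := sqr_ge0 mu; have := sqr_ge0 ((a - b) / 2); nra.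
have := @cosh_bd R w hw; lra.
Qed.

Lemma numeric (R : realType) (d : nat) (eps : R) :
  0 < eps -> eps < 1/3 -> (4 <= d)%N ->
  let t := 2 * Num.sqrt (d%:R * ln (d%:R / eps)) in
  t < d%:R ->
  2 * expR (- (4 * t / (3 * d%:R) * t)) * (1 + 3/16 * (4 * t / (3 * d%:R)) ^+ 2) ^+ (d + d)
    <= eps / d%:R / 12.
Proof.
move=> he he3 hd t ht.
rewrite /t in ht *; clear t.
set D := d%:R.
have hD : 4 <= D by rewrite /D (_ : (4:R) = 4%:R) // ler_nat.
have hDe : 1 < D / eps by rewrite ltr_pdivlMr //; lra.
set L := ln (D / eps).
set t := 2 * Num.sqrt (D * L).
have hL : 0 < L by apply: ln_gt0.
have Ht2 : t ^+ 2 = 4 * D * L.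
  rewrite /t exprMn sqr_sqrtr ?mulr_ge0 //; [ring | lra].
set lam := 4 * t / (3 * D).
set K := 1 + 3 / 16 * lam ^+ 2.
have hK : K <= expR (3 / 16 * lam ^+ 2) by rewrite /K expR_ge1Dx.
have hK0 : 0 <= K by rewrite /K; have := sqr_ge0 lam; lra.
have hKp : K ^+ (d + d) <= expR ((d + d)%:R * (3 / 16 * lam ^+ 2)).
  by rewrite expRM_natl; apply: lerXn2r; rewrite // ?nnegrE ?expR_ge0.
have Hexp : - (lam * t) + (d + d)%:R * (3 / 16 * lam ^+ 2) = - (8%:R * (L / 3)).
  rewrite natrD -/D.
  have -> : - (lam * t) + (D + D) * (3 / 16 * lam ^+ 2) = - (2 * t ^+ 2 / (3 * D)).
    by rewrite /lam; field; lra.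
  by rewrite Ht2; field; lra.
set Q := expR (L / 3).
have hQ0 : 0 < Q by apply: expR_gt0.
have HQ3 : Q ^+ 3 = D / eps.
  rewrite /Q -expRM_natl (_ : 3%:R * (L / 3) = L); last by field.
  by rewrite /L lnK // posrE; lra.
have HQ : 2 < Q.
  rewrite ltNge; apply/negP => hQ2.
  have : Q ^+ 3 <= 2 ^+ 3 by apply: lerXn2r; rewrite // ?nnegrE; lra.
  rewrite HQ3 => H; have : 12 < D / eps by rewrite ltr_pdivlMr //; lra.
  lra.
have Hbound : 2 * expR (- (lam * t)) * K ^+ (d + d) <= 2 * (Q ^+ 8)^-1.
  rewrite -mulrA ler_pM2l //.
  apply: le_trans (_ : expR (- (lam * t)) * expR ((d + d)%:R * (3 / 16 * lam ^+ 2)) <= _).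
    by rewrite ler_wpM2l ?expR_ge0.
  by rewrite -expRD Hexp expRN expRM_natl.
apply: le_trans Hbound _.
have -> : eps / D / 12 = (12 * Q ^+ 3)^-1.
  by rewrite HQ3; field; apply/andP; split; rewrite gt_eqF //; lra.
have hQ8 : 0 < Q ^+ 8 by apply: exprn_gt0.
have hQ3 : 0 < 12 * Q ^+ 3 by rewrite mulr_gt0 // exprn_gt0.
rewrite ler_pdivrMr // mulrC ler_pdivlMr //.
have -> : Q ^+ 8 = Q ^+ 3 * Q ^+ 5 by rewrite -exprD.
have h5 : 24 <= Q ^+ 5.
  have -> : Q ^+ 5 = Q ^+ 3 * (Q * Q) by rewrite -expr2 -exprD.
  have : 12 < Q ^+ 3 by rewrite HQ3 ltr_pdivlMr //; lra.
  nra.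
have := exprn_gt0 3 hQ0; nra.
Qed.


Lemma ham_xx d (x : cube d) : hamming x x = 0%N.
Proof. by apply: eq_card0 => i; rewrite inE eqxx. Qed.

Lemma vc_lip (R : realType) d (f : cube d -> R) (C : {set cube d}) :
  vertex_cover f C -> forall x y, x \notin C -> y \notin C ->
  `|f x - f y| <= (hamming x y)%:R.
Proof.
move=> HC x y hx hy; rewrite leNgt; apply/negP => H.
have : B0 f x y by rewrite /B0 /VS lt_max ltxx orbF subr_gt0.
by move/HC; rewrite (negbTE hx) (negbTE hy).
Qed.

Lemma extend (R : realType) d (f : cube d -> R) (C : {set cube d}) (y0 : cube d) :
  y0 \notin C -> vertex_cover f C ->
  exists g : cube d -> R, Defs.lipschitz g /\ forall x, x \notin C -> g x = f x.
Proof.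
move=> hy0 HC.
pose F x y := f y + (hamming x y)%:R.
pose g x := F x [arg min_(y < y0 | y \notin C) F x y]%O.
have gle : forall x z, z \notin C -> g x <= F x z.
  move=> x z hz; rewrite /g; case: arg_minP => // y hy H; exact: H.
have gex : forall x, exists2 y, y \notin C & g x = F x y.
  move=> x; rewrite /g; case: arg_minP => // y hy H; by exists y.
have half : forall x z, g x <= g z + (hamming x z)%:R.
  move=> x z; have [y hy ->] := gex z.
  apply: le_trans (gle x y hy) _; rewrite /F -addrA lerD2l -natrD ler_nat.
  by rewrite addnC; apply: ham_tri.
exists g; split.
  move=> x z; rewrite ler_norml; apply/andP; split.
    by have := half z x; rewrite ham_sym; lra.
  by have := half x z; lra.
move=> x hx; apply/eqP; rewrite eq_le; apply/andP; split.
  by have := gle x x hx; rewrite /F ham_xx addr0.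
have [y hy ->] := gex x; rewrite /F.
have := @vc_lip R d f C HC x y hx hy; rewrite ler_norml => /andP [_ H]; lra.
Qed.

Lemma C_bound (R : realType) d (f : cube d -> R) (C : {set cube d}) (eps : R) :
  l0_Lip f <= eps -> min_vertex_cover f C ->
  #|C|%:R / (2 ^ d)%:R <= eps.
Proof.
move=> hl [HC Hmin]; apply: le_trans hl; apply: lb_le_inf.
  exists (disagree f (fun _ => 0)), (fun _ => 0); split => //.
  by move=> x y; rewrite subrr normr0 ler0n.
move=> r [g [Hg ->]]; rewrite /disagree ler_pM2r ?invr_gt0 ?N_gt0 // ler_nat.
have -> : #|[pred x | f x != g x]| = #|[set x | f x != g x]|.
  by apply: eq_card => x; rewrite !inE.
apply: Hmin => x y; rewrite !inE => Hb.
apply/contraT; rewrite negb_or => /andP [/negbNE/eqP hx /negbNE/eqP hy].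
move: Hb; rewrite /B0 /VS lt_max ltxx orbF subr_gt0 hx hy ltNge.
by rewrite Hg.
Qed.


Theorem lemma6p5 (R : realType) (d : nat) (eps : R) (f : cube d -> R)
    (C : {set cube d}) :
  0 < eps -> eps < 1 / 3 -> (4 <= d)%N ->
  l0_Lip f <= eps ->
  min_vertex_cover f C ->
  let t := 2 * Num.sqrt (d%:R * ln (d%:R / eps)) in
  #|[pred p : cube d |
       prob_notin f (intv (f p) t)
       > epsC f C (fun r => ~~ intv (f p) t r) + eps / d%:R]|%:R / (2 ^ d)%:R
  <= 5 / 12 :> R.
Proof.
move=> he he3 hd hl hC; cbv zeta.
set t := 2 * Num.sqrt (d%:R * ln (d%:R / eps)).
have hN := N_gt0 R d.
have hCb := @C_bound R d f C eps hl hC.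
have hdR : 4 <= d%:R :> R by rewrite ler_nat.
have [y0 hy0] : exists y0 : cube d, y0 \notin C.
  case: (pickP (fun y : cube d => y \notin C)) => [y hy|Hall]; first by exists y.
  exfalso.
  have HC : #|C| = (2 ^ d)%N.
    apply/eqP; rewrite -card_cube eqn_leq max_card /=.
    apply: subset_leq_card; apply/fintype.subsetP => x _.
    by move: (Hall x) => /negbFE.
  by move: hCb; rewrite HC divff ?gt_eqF //; lra.
have [g [Hg Hgf]] := @extend R d f C y0 hy0 hC.1.
pose cnt p := (#|[pred x : cube d | t < `|g x - g p|]|%:R : R).
pose M := eps / d%:R * (2 ^ d)%:R.
have hM : 0 < M by rewrite /M !mulr_gt0 // invr_gt0; lra.
have bad_imp : forall p : cube d,
    epsC f C (fun r => ~~ intv (f p) t r) + eps / d%:R < prob_notin f (intv (f p) t) ->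
    (p \in C) || (M < cnt p).
  move=> p; rewrite /prob_notin /epsC.
  have Hsplit : #|[pred x : cube d | ~~ intv (f p) t (f x)]| =
      (#|[pred x : cube d | (x \in C) && ~~ intv (f p) t (f x)]| +
       #|[pred x : cube d | (x \notin C) && ~~ intv (f p) t (f x)]|)%N.
    rewrite -(cardID (mem C) [pred x : cube d | ~~ intv (f p) t (f x)]).
    by congr (_ + _)%N; apply: eq_card => x; rewrite !inE andbC.
  rewrite Hsplit natrD mulrDl => H.
  have H2 : M < #|[pred x : cube d | (x \notin C) && ~~ intv (f p) t (f x)]|%:R.
    rewrite /M -ltr_pdivlMr //; lra.
  case: (boolP (p \in C)) => //= hp.
  apply: lt_le_trans H2 _; rewrite ler_nat; apply: subset_leq_card.
  apply/fintype.subsetP => x; rewrite !inE => /andP [hx hI].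
  rewrite Hgf // Hgf //.
  move: hI; rewrite /intv negb_and -!ltNge => /orP [h|h]; rewrite ltr_normr.
    by apply/orP; right; lra.
  by apply/orP; left; lra.
have HB : (#|[pred p : cube d |
       (prob_notin f (intv (f p) t)
       > epsC f C (fun r => ~~ intv (f p) t r) + eps / d%:R)%R]| <= #|C| + #|[pred p : cube d | (M < cnt p)%R]|)%N.
  apply: leq_trans (_ : #|[predU mem C & [pred p : cube d | (M < cnt p)%R]]| <= _)%N.
    apply: subset_leq_card; apply/fintype.subsetP => p; rewrite !inE => Hp.
    exact: bad_imp.
  by rewrite -cardUI leq_addr.
have H3 : #|[pred p : cube d | M < cnt p]|%:R * M <= \sum_p cnt p.
  rewrite (bigID (fun p => M < cnt p)) /=.
  apply: le_trans (_ : \sum_(p | M < cnt p) cnt p <= _).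
    rewrite mulr_natl -sumr_const; apply: ler_sum => p; rewrite inE; exact: ltW.
  by rewrite lerDl sumr_ge0 // => p _; rewrite ler0n.
have H4 : \sum_p cnt p <= M * (2 ^ d)%:R / 12.
  case: (lerP d%:R t) => ht.
    rewrite big1; first by rewrite /M; apply: mulr_ge0; [apply: mulr_ge0; [exact: ltW|] |]; rewrite ?invr_ge0; lra.
    move=> p _; rewrite /cnt (_ : #|_| = 0%N) //; apply: eq_card0 => x; rewrite inE.
    apply/negbTE; rewrite -leNgt; apply: le_trans (Hg x p) _.
    by apply: le_trans ht; rewrite ler_nat ham_le.
  have Hn := @numeric R d eps he he3 hd ht.
  have ht0 : 0 <= t by rewrite /t mulr_ge0 ?sqrtr_ge0.
  have hd0 : 0 < 3 * d%:R :> R by lra.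
  set lam := 4 * t / (3 * d%:R) in Hn *.
  have hl0 : 0 <= lam by rewrite /lam divr_ge0 //; lra.
  have hl43 : lam <= 4/3 by rewrite /lam ler_pdivrMr //; lra.
  have hlam : `|lam| <= 4/3 by rewrite ger0_norm.
  have hlamN : `|-lam| <= 4/3 by rewrite normrN.
  set K := 1 + 3/16 * lam ^+ 2 in Hn *.
  have HS1 := @mgf R d g lam K Hg (@step_ok R lam hlam).
  have HK2 : forall a b : R, `|a - b| <= 1 ->
     expR (- lam * a) + expR (- lam * b) <= 2 * K * expR (- lam * ((a + b) / 2)).
    by move: (@step_ok R (-lam) hlamN); rewrite sqrrN.
  have HS2 := @mgf R d g (- lam) K Hg HK2.
  set N := (2 ^ d)%:R in HS1 HS2 hN *.
  set m := (\sum_x g x) / N in HS1 HS2.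
  set S1 := \sum_x expR (lam * g x) in HS1.
  set S2 := \sum_x expR (- lam * g x) in HS2.
  have hS1 : 0 <= S1 by apply: sumr_ge0 => x _; exact: expR_ge0.
  have hS2 : 0 <= S2 by apply: sumr_ge0 => x _; exact: expR_ge0.
  have hK0 : 0 <= K by rewrite /K; have := sqr_ge0 lam; lra.
  have S12 : S1 * S2 <= K ^+ (d + d) * N ^+ 2.
    apply: le_trans (ler_pM hS1 hS2 HS1 HS2) _.
    have E1 : expR (lam * m) * expR (- lam * m) = 1 by rewrite mulNr expRxMexpNx_1.
    have -> : K ^+ d * N * expR (lam * m) * (K ^+ d * N * expR (- lam * m)) =
        K ^+ (d + d) * N ^+ 2 * (expR (lam * m) * expR (- lam * m)) by rewrite exprD; ring.
    by rewrite E1 mulr1.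
  set c := expR (- (lam * t)) in Hn *.
  have hc : 0 <= c by exact: expR_ge0.
  pose F x p := (expR (lam * g x) * expR (- lam * g p) + expR (- lam * g x) * expR (lam * g p)) * c.
  have hF : forall x p, 0 <= F x p.
    by move=> x p; rewrite /F mulr_ge0 // addr_ge0 // mulr_ge0 // expR_ge0.
  have pt : forall x p, t < `|g x - g p| -> 1 <= F x p.
    move=> x p; rewrite ltr_normr /F mulrDl -!expRD => /orP [h|h].
      have h1 : 0 <= lam * g x + - lam * g p + - (lam * t) by nra.
      have := expR_ge1Dx (lam * g x + - lam * g p + - (lam * t)).
      have := expR_ge0 (- lam * g x + lam * g p + - (lam * t)); lra.
    have h1 : 0 <= - lam * g x + lam * g p + - (lam * t) by nra.
    have := expR_ge1Dx (- lam * g x + lam * g p + - (lam * t)).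
    have := expR_ge0 (lam * g x + - lam * g p + - (lam * t)); lra.
  have Hcnt : forall p, cnt p <= \sum_x F x p.
    move=> p; rewrite /cnt -sumr_const.
    rewrite [X in _ <= X](bigID (fun x => t < `|g x - g p|)) /=.
    apply: le_trans (_ : \sum_(x | t < `|g x - g p|) F x p <= _).
      by apply: ler_sum => x; rewrite inE; exact: pt.
    by rewrite lerDl; apply: sumr_ge0 => x _.
  have Hdouble : \sum_p \sum_x F x p = (S1 * S2 + S2 * S1) * c.
    rewrite /F.
    rewrite (eq_bigr (fun p => (S1 * expR (- lam * g p) + S2 * expR (lam * g p)) * c)); last first.
      by move=> p _; rewrite -mulr_suml big_split /= -!mulr_suml.
    rewrite -mulr_suml big_split /= -!mulr_sumr //.
  apply: le_trans (ler_sum _ (fun p _ => Hcnt p)) _.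
  rewrite Hdouble.
  apply: le_trans (_ : 2 * c * K ^+ (d + d) * N ^+ 2 <= _).
    have -> : (S1 * S2 + S2 * S1) * c = 2 * c * (S1 * S2) by ring.
    by rewrite -[2 * c * _ * _]mulrA ler_wpM2l ?mulr_ge0.
  apply: le_trans (_ : eps / d%:R / 12 * N ^+ 2 <= _).
    by rewrite ler_wpM2r ?sqr_ge0.
  by rewrite /M -/N le_eqVlt; apply/orP; left; apply/eqP; field; lra.
have Hcard : #|[pred p : cube d | M < cnt p]|%:R <= (2 ^ d)%:R / 12 :> R.
  rewrite -(ler_pM2r hM); apply: le_trans H3 _; apply: le_trans H4 _.
  by rewrite le_eqVlt; apply/orP; left; apply/eqP; field.
rewrite ler_pdivrMr //.
apply: le_trans (_ : (#|C| + #|[pred p : cube d | (M < cnt p)%R]|)%:R <= _).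
  by rewrite ler_nat.
rewrite natrD.
move: hCb; rewrite ler_pdivrMr // => hCb.
have hE : eps * (2 ^ d)%:R <= 1/3 * (2 ^ d)%:R by rewrite ler_pM2r //; lra.
lra.
Qed.
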